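(* For a dcpo $X$, let $\wp(X)=\mathbf{DcPA}(\mathbf{Dcpo}(X,3),3)$ be the set of maps of directed complete Plotkin algebras from $\mathbf{Dcpo}(X,3)$ (with pointwise structure) to $3$. Then $$\wp(X)\cong\{(f_1,f_2): f_1\in\mathbf{CL}_{\vee,1}(\mathcal{O}(X),2),\ f_2\in\mathbf{PreFrm}_0(\mathcal{O}(X),2),\ f_1\ge f_2\}.$$
   Context: $3=\{0,\bowtie,1\}$ with $0\le\bowtie\le 1$, a Plotkin algebra with $a\amalg b=0$ if $a=b=0$, $=1$ if $a=b=1$, and $=\bowtie$ otherwise. $\mathbf{DcPA}$ is the category of directed complete Plotkin algebras (dcpos with least/greatest elements $0,1$, a Scott continuous idempotent commutative associative monotone operation $\amalg$ and an absorbing element $\bowtie$), with Scott continuous maps preserving $\amalg,\bowtie,0,1$. $\mathcal{O}(X)$ is the frame of Scott open subsets of $X$. $\mathbf{CL}_{\vee,1}$: complete lattices with maps preserving all joins and top. $\mathbf{PreFrm}_0$: preframes with bottom (dcpos with finite meets, binary meet Scott continuous) and Scott continuous maps preserving finite meets and bottom. $2=\{0<1\}$; $f_1\ge f_2$ pointwise. *)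

(* Defs.v *)
Definition is_ub {T : Type} (le : T -> T -> Prop) (D : T -> Prop) (s : T) : Prop :=
  forall d, D d -> le d s.

Definition is_sup {T : Type} (le : T -> T -> Prop) (D : T -> Prop) (s : T) : Prop :=
  is_ub le D s /\ forall u, is_ub le D u -> le s u.

Definition directed {T : Type} (le : T -> T -> Prop) (D : T -> Prop) : Prop :=
  (exists d, D d) /\
  forall a b, D a -> D b -> exists c, D c /\ le a c /\ le b c.

Definition monotone {S T : Type} (leS : S -> S -> Prop) (leT : T -> T -> Prop)
  (f : S -> T) : Prop := forall a b, leS a b -> leT (f a) (f b).

Definition scott_continuous {S T : Type} (leS : S -> S -> Prop) (leT : T -> T -> Prop)
  (f : S -> T) : Prop :=
  monotone leS leT f /\
  forall (D : S -> Prop) (s : S), directed leS D -> is_sup leS D s ->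
    is_sup leT (fun t => exists d, D d /\ f d = t) (f s).

Record dcpo := Dcpo {
  carrier :> Type;
  dle : carrier -> carrier -> Prop;
  dle_refl : forall x, dle x x;
  dle_trans : forall x y z, dle x y -> dle y z -> dle x z;
  dle_antisym : forall x y, dle x y -> dle y x -> x = y;
  dcomplete : forall D : carrier -> Prop, directed dle D -> exists s, is_sup dle D s
}.

Inductive three : Type := T0 | Tb | T1.

Definition le3 (a b : three) : Prop :=
  match a, b with
  | T0, _ => True
  | Tb, (Tb | T1) => True
  | T1, T1 => True
  | _, _ => False
  end.

Definition amalg3 (a b : three) : three :=
  match a, b with
  | T0, T0 => T0
  | T1, T1 => T1
  | _, _ => Tb
  end.

Definition C3 (X : dcpo) : Type := { g : X -> three | scott_continuous (@dle X) le3 g }.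

Definition C3le {X : dcpo} (g h : C3 X) : Prop :=
  forall x, le3 (proj1_sig g x) (proj1_sig h x).

(* DcPA morphisms Dcpo(X,3) -> 3: Scott continuous, preserving the pointwise
   amalg, the absorbing element bowtie, and 0, 1 (constant maps). *)
Definition dcpa_hom (X : dcpo) (phi : C3 X -> three) : Prop :=
  scott_continuous (@C3le X) le3 phi /\
  (forall g h k : C3 X,
     (forall x, proj1_sig k x = amalg3 (proj1_sig g x) (proj1_sig h x)) ->
     phi k = amalg3 (phi g) (phi h)) /\
  (forall k : C3 X, (forall x, proj1_sig k x = Tb) -> phi k = Tb) /\
  (forall k : C3 X, (forall x, proj1_sig k x = T0) -> phi k = T0) /\
  (forall k : C3 X, (forall x, proj1_sig k x = T1) -> phi k = T1).

Definition wp (X : dcpo) : Type := { phi : C3 X -> three | dcpa_hom X phi }.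

Definition scott_open (X : dcpo) (U : X -> Prop) : Prop :=
  (forall x y, U x -> dle X x y -> U y) /\
  (forall (D : X -> Prop) (s : X), directed (@dle X) D -> is_sup (@dle X) D s ->
     U s -> exists d, D d /\ U d).

Definition OX (X : dcpo) : Type := { U : X -> Prop | scott_open X U }.

Definition Ole {X : dcpo} (U V : OX X) : Prop :=
  forall x, proj1_sig U x -> proj1_sig V x.

Definition le2 (a b : bool) : Prop := a = true -> b = true.

Definition CL_join_top (X : dcpo) (f : OX X -> bool) : Prop :=
  (forall (S : OX X -> Prop) (W : OX X),
     (forall x, proj1_sig W x <-> exists U, S U /\ proj1_sig U x) ->
     (f W = true <-> exists U, S U /\ f U = true)) /\
  (forall W : OX X, (forall x, proj1_sig W x) -> f W = true).

Definition preframe0_hom (X : dcpo) (f : OX X -> bool) : Prop :=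
  scott_continuous (@Ole X) le2 f /\
  (forall U V W : OX X,
     (forall x, proj1_sig W x <-> (proj1_sig U x /\ proj1_sig V x)) ->
     f W = andb (f U) (f V)) /\
  (forall W : OX X, (forall x, proj1_sig W x) -> f W = true) /\
  (forall W : OX X, (forall x, ~ proj1_sig W x) -> f W = false).

Definition pairs (X : dcpo) : Type :=
  { p : (OX X -> bool) * (OX X -> bool) |
      CL_join_top X (fst p) /\ preframe0_hom X (snd p) /\
      forall U, le2 (snd p U) (fst p U) }.

(* Main.v *)
Require Import Defs.
From Stdlib Require Import Classical ClassicalEpsilon FunctionalExtensionality PropExtensionality ProofIrrelevance Bool.

Definition nz (a : three) : bool := match a with T0 => false | _ => true end.
Definition one (a : three) : bool := match a with T1 => true | _ => false end.
Definition comb (a b : bool) : three := if b then T1 else if a then Tb else T0.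

Ltac t3 := repeat match goal with
  | H : True |- _ => clear H
  | H : False |- _ => destruct H
  | H : false = true |- _ => discriminate H
  | H : true = false |- _ => discriminate H
  | H : true = true -> false = true |- _ => discriminate (H eq_refl)
  | |- True => exact I
  end; try reflexivity.

Lemma mono_of_levels {X : dcpo} (g : X -> three) :
  (forall a b, nz (g a) = true -> dle X a b -> nz (g b) = true) ->
  (forall a b, one (g a) = true -> dle X a b -> one (g b) = true) ->
  monotone (@dle X) le3 g.
Proof.
  intros h1 h2 a b hab. specialize (h1 a b); specialize (h2 a b).
  destruct (g a), (g b); simpl in *; t3;
  try (specialize (h1 eq_refl hab)); try (specialize (h2 eq_refl hab)); simpl in *; t3.
Qed.

Lemma cont_of_levels {X : dcpo} (g : X -> three) :
  scott_open X (fun x => nz (g x) = true) ->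
  scott_open X (fun x => one (g x) = true) ->
  scott_continuous (@dle X) le3 g.
Proof.
  intros [u1 i1] [u2 i2].
  assert (hm : monotone (@dle X) le3 g) by (apply mono_of_levels; auto).
  split; [exact hm|].
  intros D s hD hs. split.
  - intros t [d [hd <-]]. apply hm. apply (proj1 hs). exact hd.
  - intros u hu. destruct (g s) eqn:Es; simpl; [exact I| |].
    + destruct (i1 D s hD hs) as [d [hd hnz]]; [rewrite Es; reflexivity|].
      assert (hdu := hu (g d) (ex_intro _ d (conj hd eq_refl))).
      destruct (g d), u; simpl in *; t3.
    + destruct (i2 D s hD hs) as [d [hd hnz]]; [rewrite Es; reflexivity|].
      assert (hdu := hu (g d) (ex_intro _ d (conj hd eq_refl))).
      destruct (g d), u; simpl in *; t3.
Qed.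

Lemma levels_of_cont {X : dcpo} (g : X -> three) :
  scott_continuous (@dle X) le3 g ->
  scott_open X (fun x => nz (g x) = true) /\ scott_open X (fun x => one (g x) = true).
Proof.
  intros [hm hc]. split; split.
  - intros a b ha hab. specialize (hm a b hab). destruct (g a), (g b); simpl in *; t3.
  - intros D s hD hs hsv. destruct (classic (exists d, D d /\ nz (g d) = true)) as [H|H]; [exact H|].
    exfalso. destruct (hc D s hD hs) as [_ hl].
    assert (hle : le3 (g s) T0).
    { apply hl. intros t [d [hd <-]]. destruct (g d) eqn:E; simpl; t3;
      (apply H; exists d; rewrite E; split; [exact hd|reflexivity]). }
    destruct (g s); simpl in *; t3.
  - intros a b ha hab. specialize (hm a b hab). destruct (g a), (g b); simpl in *; t3.
  - intros D s hD hs hsv. destruct (classic (exists d, D d /\ one (g d) = true)) as [H|H]; [exact H|].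
    exfalso. destruct (hc D s hD hs) as [_ hl].
    assert (hle : le3 (g s) Tb).
    { apply hl. intros t [d [hd <-]]. destruct (g d) eqn:E; simpl; t3;
      (apply H; exists d; rewrite E; split; [exact hd|reflexivity]). }
    destruct (g s); simpl in *; t3.
Qed.

Lemma scott_open_ext {X : dcpo} (P Q : X -> Prop) :
  (forall x, P x <-> Q x) -> scott_open X P -> scott_open X Q.
Proof.
  intros e [u i]. split.
  - intros a b ha hab. apply e. apply (u a b); [apply e; exact ha | exact hab].
  - intros D s hD hs hq. destruct (i D s hD hs (proj2 (e s) hq)) as [d [hd hp]].
    exists d. split; [exact hd| apply e; exact hp].
Qed.

Definition mk3 {X : dcpo} (P1 P2 : X -> Prop) (x : X) : three :=
  if excluded_middle_informative (P2 x) then T1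
  else if excluded_middle_informative (P1 x) then Tb else T0.

Lemma mk3_T1 {X : dcpo} (P1 P2 : X -> Prop) x : P2 x -> mk3 P1 P2 x = T1.
Proof. intro h. unfold mk3. destruct (excluded_middle_informative (P2 x)); [reflexivity|contradiction]. Qed.
Lemma mk3_Tb {X : dcpo} (P1 P2 : X -> Prop) x : ~ P2 x -> P1 x -> mk3 P1 P2 x = Tb.
Proof. intros h h'. unfold mk3. destruct (excluded_middle_informative (P2 x)); [contradiction|].
  destruct (excluded_middle_informative (P1 x)); [reflexivity|contradiction]. Qed.
Lemma mk3_T0 {X : dcpo} (P1 P2 : X -> Prop) x : ~ P2 x -> ~ P1 x -> mk3 P1 P2 x = T0.
Proof. intros h h'. unfold mk3. destruct (excluded_middle_informative (P2 x)); [contradiction|].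
  destruct (excluded_middle_informative (P1 x)); [contradiction|reflexivity]. Qed.

Lemma mk3_nz {X : dcpo} (P1 P2 : X -> Prop) : (forall x, P2 x -> P1 x) ->
  forall x, nz (mk3 P1 P2 x) = true <-> P1 x.
Proof.
  intros h x. destruct (classic (P2 x)) as [a|a].
  - rewrite mk3_T1 by exact a. simpl. split; auto.
  - destruct (classic (P1 x)) as [b|b].
    + rewrite mk3_Tb by assumption. simpl. split; auto.
    + rewrite mk3_T0 by assumption. simpl. split; intro c; [discriminate c|contradiction].
Qed.

Lemma mk3_one {X : dcpo} (P1 P2 : X -> Prop) :
  forall x, one (mk3 P1 P2 x) = true <-> P2 x.
Proof.
  intros x. destruct (classic (P2 x)) as [a|a].
  - rewrite mk3_T1 by exact a. simpl. split; auto.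
  - destruct (classic (P1 x)) as [b|b].
    + rewrite mk3_Tb by assumption. simpl. split; intro c; [discriminate c|contradiction].
    + rewrite mk3_T0 by assumption. simpl. split; intro c; [discriminate c|contradiction].
Qed.

Lemma mk3_cont {X : dcpo} (P1 P2 : X -> Prop) (h1 : scott_open X P1) (h2 : scott_open X P2)
  (h : forall x, P2 x -> P1 x) : scott_continuous (@dle X) le3 (mk3 P1 P2).
Proof.
  apply cont_of_levels.
  - apply (scott_open_ext P1); [intro x; symmetry; apply mk3_nz; exact h| exact h1].
  - apply (scott_open_ext P2); [intro x; symmetry; apply mk3_one| exact h2].
Qed.

Definition mkC3 {X : dcpo} (P1 P2 : X -> Prop) (h1 : scott_open X P1) (h2 : scott_open X P2)
  (h : forall x, P2 x -> P1 x) : C3 X := exist _ (mk3 P1 P2) (mk3_cont P1 P2 h1 h2 h).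

Definition chi {X : dcpo} (U : OX X) : C3 X :=
  mkC3 (proj1_sig U) (proj1_sig U) (proj2_sig U) (proj2_sig U) (fun x h => h).

Lemma chi_in {X : dcpo} (U : OX X) x : proj1_sig U x -> proj1_sig (chi U) x = T1.
Proof. intro h. unfold chi, mkC3. cbn. apply mk3_T1. exact h. Qed.
Lemma chi_out {X : dcpo} (U : OX X) x : ~ proj1_sig U x -> proj1_sig (chi U) x = T0.
Proof. intro h. unfold chi, mkC3. cbn. apply mk3_T0; exact h. Qed.

Definition O1 {X : dcpo} (g : C3 X) : OX X :=
  exist _ (fun x => nz (proj1_sig g x) = true) (proj1 (levels_of_cont _ (proj2_sig g))).
Definition O2 {X : dcpo} (g : C3 X) : OX X :=
  exist _ (fun x => one (proj1_sig g x) = true) (proj2 (levels_of_cont _ (proj2_sig g))).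

Lemma union_open {X : dcpo} (U V : OX X) :
  scott_open X (fun x => proj1_sig U x \/ proj1_sig V x).
Proof.
  destruct U as [U [uu iu]], V as [V [uv iv]]; cbn. split.
  - intros a b [h|h] hab; [left; exact (uu a b h hab)| right; exact (uv a b h hab)].
  - intros D s hD hs [h|h].
    + destruct (iu D s hD hs h) as [d [hd h']]. exists d; auto.
    + destruct (iv D s hD hs h) as [d [hd h']]. exists d; auto.
Qed.

Lemma inter_open {X : dcpo} (U V : OX X) :
  scott_open X (fun x => proj1_sig U x /\ proj1_sig V x).
Proof.
  destruct U as [U [uu iu]], V as [V [uv iv]]; cbn. split.
  - intros a b [h h'] hab; split; [exact (uu a b h hab)| exact (uv a b h' hab)].
  - intros D s hD hs [h h'].
    destruct (iu D s hD hs h) as [d1 [hd1 e1]].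
    destruct (iv D s hD hs h') as [d2 [hd2 e2]].
    destruct (proj2 hD d1 d2 hd1 hd2) as [c [hc [l1 l2]]].
    exists c. split; [exact hc|split; [exact (uu _ _ e1 l1)|exact (uv _ _ e2 l2)]].
Qed.

Lemma empty_open {X : dcpo} : scott_open X (fun _ => False).
Proof. split; intros; contradiction. Qed.

Lemma big_open {X : dcpo} (S : OX X -> Prop) :
  scott_open X (fun x => exists U, S U /\ proj1_sig U x).
Proof.
  split.
  - intros a b [U [hU ha]] hab. exists U. split; [exact hU|]. exact (proj1 (proj2_sig U) a b ha hab).
  - intros D s hD hs [U [hU hx]]. destruct (proj2 (proj2_sig U) D s hD hs hx) as [d [hd hdu]].
    exists d. split; [exact hd|]. exists U. auto.
Qed.

Definition OX_union {X : dcpo} (U V : OX X) : OX X := exist _ _ (union_open U V).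
Definition OX_inter {X : dcpo} (U V : OX X) : OX X := exist _ _ (inter_open U V).
Definition OX_empty {X : dcpo} : OX X := exist _ _ (@empty_open X).
Definition OX_big {X : dcpo} (S : OX X -> Prop) : OX X := exist _ _ (big_open S).

Lemma OX_ext {X : dcpo} (U V : OX X) : (forall x, proj1_sig U x <-> proj1_sig V x) -> U = V.
Proof.
  destruct U as [U hU], V as [V hV]; cbn. intro e.
  assert (U = V) by (apply functional_extensionality; intro x; apply propositional_extensionality; apply e).
  subst. f_equal. apply proof_irrelevance.
Qed.

Lemma sig_ext {A : Type} {P : A -> Prop} (a b : {x : A | P x}) : proj1_sig a = proj1_sig b -> a = b.
Proof. destruct a, b; cbn. intro e. subst. f_equal. apply proof_irrelevance. Qed.

Lemma chi_mono {X : dcpo} (U V : OX X) : Ole U V -> C3le (chi U) (chi V).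
Proof.
  intros h x. destruct (classic (proj1_sig U x)) as [hu|hu].
  - rewrite (chi_in U x hu), (chi_in V x (h x hu)). exact I.
  - rewrite (chi_out U x hu). exact I.
Qed.

Lemma chi_O1 {X : dcpo} (g : C3 X) x :
  proj1_sig (chi (O1 g)) x = (if nz (proj1_sig g x) then T1 else T0).
Proof.
  destruct (nz (proj1_sig g x)) eqn:E.
  - apply chi_in. exact E.
  - apply chi_out. cbn. rewrite E. discriminate.
Qed.
Lemma chi_O2 {X : dcpo} (g : C3 X) x :
  proj1_sig (chi (O2 g)) x = (if one (proj1_sig g x) then T1 else T0).
Proof.
  destruct (one (proj1_sig g x)) eqn:E.
  - apply chi_in. exact E.
  - apply chi_out. cbn. rewrite E. discriminate.
Qed.

Lemma key {X : dcpo} (phi : C3 X -> three) (H : dcpa_hom X phi) (g : C3 X) :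
  nz (phi g) = nz (phi (chi (O1 g))) /\ one (phi g) = one (phi (chi (O2 g))).
Proof.
  destruct H as [[hm _] [ha _]].
  assert (E : phi g = amalg3 (phi (chi (O1 g))) (phi (chi (O2 g)))).
  { apply ha. intro x. rewrite chi_O1, chi_O2. destruct (proj1_sig g x); reflexivity. }
  assert (hle : le3 (phi (chi (O2 g))) (phi (chi (O1 g)))).
  { apply hm. apply chi_mono. intros x hx. cbn in *. destruct (proj1_sig g x); cbn in *; t3. }
  revert hle. rewrite E. generalize (phi (chi (O1 g))) (phi (chi (O2 g))).
  intros a b hle. destruct a, b; cbn in *; t3; split; reflexivity.
Qed.

Section FSec.
Context {X : dcpo} (phi : C3 X -> three) (H : dcpa_hom X phi).

Definition f1 (U : OX X) : bool := nz (phi (chi U)).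
Definition f2 (U : OX X) : bool := one (phi (chi U)).

Lemma phi_mono : monotone (@C3le X) le3 phi.
Proof. exact (proj1 (proj1 H)). Qed.

Lemma f1_mono U V : Ole U V -> le2 (f1 U) (f1 V).
Proof. intro h. unfold f1, le2. assert (l := phi_mono _ _ (chi_mono U V h)).
  intro hh. destruct (phi (chi U)), (phi (chi V)); cbn in *; t3. Qed.
Lemma f2_mono U V : Ole U V -> le2 (f2 U) (f2 V).
Proof. intro h. unfold f2, le2. assert (l := phi_mono _ _ (chi_mono U V h)).
  intro hh. destruct (phi (chi U)), (phi (chi V)); cbn in *; t3. Qed.

Lemma phi_chi0 (W : OX X) : (forall x, ~ proj1_sig W x) -> phi (chi W) = T0.
Proof. intro h. apply (proj1 (proj2 (proj2 (proj2 H)))). intro x. apply chi_out. apply h. Qed.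
Lemma phi_chi1 (W : OX X) : (forall x, proj1_sig W x) -> phi (chi W) = T1.
Proof. intro h. apply (proj2 (proj2 (proj2 (proj2 H)))). intro x. apply chi_in. apply h. Qed.

Definition kUV (U V : OX X) : C3 X :=
  mkC3 _ _ (union_open U V) (inter_open U V) (fun x h => or_introl (proj1 h)).

Lemma phi_kUV U V : phi (kUV U V) = amalg3 (phi (chi U)) (phi (chi V)).
Proof.
  apply (proj1 (proj2 H)). intro x.
  destruct (classic (proj1_sig U x)) as [a|a]; destruct (classic (proj1_sig V x)) as [b|b].
  - rewrite (chi_in U x a), (chi_in V x b). unfold kUV, mkC3. cbn. rewrite mk3_T1 by tauto. reflexivity.
  - rewrite (chi_in U x a), (chi_out V x b). unfold kUV, mkC3. cbn. rewrite mk3_Tb by tauto. reflexivity.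
  - rewrite (chi_out U x a), (chi_in V x b). unfold kUV, mkC3. cbn. rewrite mk3_Tb by tauto. reflexivity.
  - rewrite (chi_out U x a), (chi_out V x b). unfold kUV, mkC3. cbn. rewrite mk3_T0 by tauto. reflexivity.
Qed.

Lemma f1_union U V : f1 (OX_union U V) = f1 U || f1 V.
Proof.
  assert (e : O1 (kUV U V) = OX_union U V).
  { apply OX_ext. intro x. unfold kUV, mkC3, O1. cbn. exact (mk3_nz _ _ (fun y hy => or_introl (proj1 hy)) x). }
  unfold f1. rewrite <- e, <- (proj1 (key phi H (kUV U V))), phi_kUV.
  destruct (phi (chi U)), (phi (chi V)); reflexivity.
Qed.

Lemma f2_inter U V : f2 (OX_inter U V) = f2 U && f2 V.
Proof.
  assert (e : O2 (kUV U V) = OX_inter U V).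
  { apply OX_ext. intro x. unfold kUV, mkC3, O2. cbn. exact (mk3_one _ _ x). }
  unfold f2. rewrite <- e, <- (proj2 (key phi H (kUV U V))), phi_kUV.
  destruct (phi (chi U)), (phi (chi V)); reflexivity.
Qed.

Lemma F_CL : CL_join_top X f1.
Proof.
  split.
  - intros S W HW. split.
    + intro H1. destruct (classic (exists U, S U /\ f1 U = true)) as [h|Hn]; [exact h|exfalso].
      set (Dc := fun c : C3 X => exists V : OX X, (Ole V W /\ f1 V = false) /\ chi V = c).
      assert (hdir : directed (@C3le X) Dc).
      { split.
        - exists (chi OX_empty). exists OX_empty. split; [split|reflexivity].
          + intros x hx. destruct hx.
          + unfold f1. rewrite phi_chi0; [reflexivity|]. intros x hx; destruct hx.
        - intros a b [V1 [[hV1 fV1] <-]] [V2 [[hV2 fV2] <-]].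
          exists (chi (OX_union V1 V2)). split.
          + exists (OX_union V1 V2). split; [split|reflexivity].
            * intros x [h|h]; auto.
            * rewrite f1_union, fV1, fV2. reflexivity.
          + split; apply chi_mono; intros x h; cbn; auto. }
      assert (hsup : is_sup (@C3le X) Dc (chi W)).
      { split.
        - intros c [V [[hV _] <-]]. apply chi_mono; exact hV.
        - intros u hu x. destruct (classic (proj1_sig W x)) as [hw|hw].
          + destruct (proj1 (HW x) hw) as [U [hS hU]].
            assert (nf : f1 U = false).
            { destruct (f1 U) eqn:E; [exfalso; apply Hn; exists U; auto|reflexivity]. }
            assert (hc := hu (chi U) (ex_intro _ U (conj (conj
                 (fun y hy => proj2 (HW y) (ex_intro _ U (conj hS hy))) nf) eq_refl))).
            specialize (hc x). rewrite (chi_in U x hU) in hc. rewrite (chi_in W x hw). exact hc.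
          + rewrite (chi_out W x hw). exact I. }
      destruct (proj2 (proj1 H) Dc (chi W) hdir hsup) as [_ hl].
      assert (hle : le3 (phi (chi W)) T0).
      { apply hl. intros t [c [[V [[_ fV] <-]] <-]]. unfold f1 in fV.
        destruct (phi (chi V)); cbn in *; t3. }
      unfold f1 in H1. destruct (phi (chi W)); cbn in *; t3.
    + intros [U [hS hU]]. apply (f1_mono U W); [|exact hU].
      intros x hx. apply HW. exists U. auto.
  - intros W hW. unfold f1. rewrite phi_chi1 by exact hW. reflexivity.
Qed.

Lemma F_pre : preframe0_hom X f2.
Proof.
  split; [split|split; [|split]].
  - intros U V h. apply f2_mono; exact h.
  - intros D s hD hs.
    set (Dc := fun c : C3 X => exists V : OX X, D V /\ chi V = c).
    assert (hdir : directed (@C3le X) Dc).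
    { split.
      - destruct (proj1 hD) as [d hd]. exists (chi d). exists d. auto.
      - intros a b [V1 [h1 <-]] [V2 [h2 <-]].
        destruct (proj2 hD V1 V2 h1 h2) as [c [hc [l1 l2]]].
        exists (chi c). split; [exists c; auto|split; apply chi_mono; assumption]. }
    assert (hsup : is_sup (@C3le X) Dc (chi s)).
    { split.
      - intros c [V [hV <-]]. apply chi_mono. apply (proj1 hs). exact hV.
      - intros u hu x. destruct (classic (proj1_sig s x)) as [hx|hx].
        + assert (hb : Ole s (OX_big D)).
          { apply (proj2 hs). intros d hd y hy. cbn. exists d. auto. }
          destruct (hb x hx) as [V [hV hVx]].
          specialize (hu (chi V) (ex_intro _ V (conj hV eq_refl)) x).
          rewrite (chi_in V x hVx) in hu. rewrite (chi_in s x hx). exact hu.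
        + rewrite (chi_out s x hx). exact I. }
    destruct (proj2 (proj1 H) Dc (chi s) hdir hsup) as [_ hl].
    split.
    + intros t [d [hd <-]]. apply f2_mono. apply (proj1 hs). exact hd.
    + intros u hu Hs. destruct u; [reflexivity|exfalso].
      assert (hle : le3 (phi (chi s)) Tb).
      { apply hl. intros t [c [[V [hV <-]] <-]].
        specialize (hu (f2 V) (ex_intro _ V (conj hV eq_refl))). unfold f2, le2 in hu.
        destruct (phi (chi V)); cbn in *; t3. }
      unfold f2 in Hs. destruct (phi (chi s)); cbn in *; t3.
  - intros U V W hW. rewrite (OX_ext W (OX_inter U V) hW). apply f2_inter.
  - intros W hW. unfold f2. rewrite phi_chi1 by exact hW. reflexivity.
  - intros W hW. unfold f2. rewrite phi_chi0 by exact hW. reflexivity.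
Qed.

Lemma F_le : forall U, le2 (f2 U) (f1 U).
Proof. intros U. unfold f1, f2, le2. intro hh. destruct (phi (chi U)); cbn in *; t3. Qed.

End FSec.

Lemma O1_chi {X : dcpo} (U : OX X) : O1 (chi U) = U.
Proof.
  apply OX_ext. intro x. cbn [O1 proj1_sig]. destruct (classic (proj1_sig U x)) as [h|h].
  - rewrite (chi_in U x h). split; auto.
  - rewrite (chi_out U x h). split; intro c; [discriminate c|contradiction].
Qed.
Lemma O2_chi {X : dcpo} (U : OX X) : O2 (chi U) = U.
Proof.
  apply OX_ext. intro x. cbn [O2 proj1_sig]. destruct (classic (proj1_sig U x)) as [h|h].
  - rewrite (chi_in U x h). split; auto.
  - rewrite (chi_out U x h). split; intro c; [discriminate c|contradiction].
Qed.

Lemma fam_open {X : dcpo} (D : C3 X -> Prop) (F : C3 X -> OX X) :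
  scott_open X (fun x => exists d, D d /\ proj1_sig (F d) x).
Proof.
  split.
  - intros a b [d [hd ha]] hab. exists d. split; [exact hd|]. exact (proj1 (proj2_sig (F d)) a b ha hab).
  - intros E s hE hs [d [hd hx]]. destruct (proj2 (proj2_sig (F d)) E s hE hs hx) as [e [he heu]].
    exists e. split; [exact he|]. exists d. auto.
Qed.

Lemma psup {X : dcpo} (D : C3 X -> Prop) (s : C3 X) : is_sup (@C3le X) D s ->
  forall x, (nz (proj1_sig s x) = true <-> exists d, D d /\ nz (proj1_sig d x) = true) /\
            (one (proj1_sig s x) = true <-> exists d, D d /\ one (proj1_sig d x) = true).
Proof.
  intros hs.
  assert (inc : forall x, (exists d, D d /\ proj1_sig (O2 d) x) -> (exists d, D d /\ proj1_sig (O1 d) x)).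
  { intros x [d [hd h]]. exists d. split; [exact hd|]. cbn in *. destruct (proj1_sig d x); cbn in *; t3. }
  set (t := mkC3 _ _ (fam_open D O1) (fam_open D O2) inc).
  assert (ht : C3le s t).
  { apply (proj2 hs). intros d hd x. unfold t, mkC3. cbn [proj1_sig].
    destruct (proj1_sig d x) eqn:E; [exact I| |].
    - assert (p1 : exists d, D d /\ proj1_sig (O1 d) x) by (exists d; split; [exact hd|cbn; rewrite E; reflexivity]).
      destruct (classic (exists d, D d /\ proj1_sig (O2 d) x)) as [p2|p2].
      + rewrite mk3_T1 by exact p2. exact I.
      + rewrite mk3_Tb by assumption. exact I.
    - assert (p2 : exists d, D d /\ proj1_sig (O2 d) x) by (exists d; split; [exact hd|cbn; rewrite E; reflexivity]).
      rewrite mk3_T1 by exact p2. exact I. }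
  intro x. specialize (ht x). unfold t, mkC3 in ht. cbn [proj1_sig] in ht. split; split.
  - intro h. apply (mk3_nz _ _ inc x). destruct (proj1_sig s x), (mk3 _ _ x); cbn in *; t3.
  - intros [d [hd h]]. assert (l := proj1 hs d hd x). destruct (proj1_sig d x), (proj1_sig s x); cbn in *; t3.
  - intro h. apply (proj1 (mk3_one (fun x => exists d, D d /\ proj1_sig (O1 d) x) (fun x => exists d, D d /\ proj1_sig (O2 d) x) x)). destruct (proj1_sig s x), (mk3 _ _ x); cbn in *; t3.
  - intros [d [hd h]]. assert (l := proj1 hs d hd x). destruct (proj1_sig d x), (proj1_sig s x); cbn in *; t3.
Qed.

Lemma comb_mono a a' b b' : le2 a a' -> le2 b b' -> le3 (comb a b) (comb a' b').
Proof. unfold le2. destruct a, a', b, b'; cbn; intros h1 h2; t3. Qed.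

Section GSec.
Context {X : dcpo} (g1 g2 : OX X -> bool)
  (hp : CL_join_top X g1 /\ preframe0_hom X g2 /\ forall U, le2 (g2 U) (g1 U)).

Definition phiG (g : C3 X) : three := comb (g1 (O1 g)) (g2 (O2 g)).

Lemma g1_union (U V W : OX X) : (forall x, proj1_sig W x <-> proj1_sig U x \/ proj1_sig V x) ->
  g1 W = g1 U || g1 V.
Proof.
  intro hW.
  assert (e := proj1 (proj1 hp) (fun Z => Z = U \/ Z = V) W).
  assert (e' : g1 W = true <-> exists Z, (Z = U \/ Z = V) /\ g1 Z = true).
  { apply e. intro x. rewrite hW. split.
    - intros [h|h]; [exists U|exists V]; auto.
    - intros [Z [[->| ->] h]]; auto. }
  destruct (g1 W) eqn:EW, (g1 U) eqn:EU, (g1 V) eqn:EV; cbn; try reflexivity;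
  first [ (destruct (proj1 e' eq_refl) as [Z [[->| ->] h]]; congruence)
        | (apply e'; first
             [ exists U; split; [left; reflexivity| exact EU]
             | exists V; split; [right; reflexivity|exact EV]]) ].
Qed.

Lemma g1_mono U V : Ole U V -> le2 (g1 U) (g1 V).
Proof.
  intros h. rewrite (g1_union U V V).
  - unfold le2. intro hU. rewrite hU. reflexivity.
  - intro x. split; [intro; right; assumption|intros [a|a]; auto].
Qed.

Lemma g1_empty (W : OX X) : (forall x, ~ proj1_sig W x) -> g1 W = false.
Proof.
  intro hW. assert (e := proj1 (proj1 hp) (fun _ => False) W).
  destruct (g1 W) eqn:E; [|reflexivity].
  destruct (proj1 (e (fun x => conj (fun h => False_ind _ (hW x h)) (fun h => match h with ex_intro _ _ (conj f _) => False_ind _ f end))) eq_refl) as [? [f _]].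
  destruct f.
Qed.

Lemma g2_mono U V : Ole U V -> le2 (g2 U) (g2 V).
Proof. apply (proj1 (proj1 (proj1 (proj2 hp)))). Qed.

Lemma g_le (g : C3 X) : le2 (g2 (O2 g)) (g1 (O1 g)).
Proof.
  intro h. apply (g1_mono (O2 g)). - intros x hx. cbn in *. destruct (proj1_sig g x); cbn in *; t3.
  - apply (proj2 (proj2 hp)). exact h.
Qed.

Lemma O_mono (g h : C3 X) : C3le g h -> Ole (O1 g) (O1 h) /\ Ole (O2 g) (O2 h).
Proof.
  intro l. split; intros x hx; cbn in *; specialize (l x);
  destruct (proj1_sig g x), (proj1_sig h x); cbn in *; t3.
Qed.

Lemma phiG_mono : monotone (@C3le X) le3 phiG.
Proof.
  intros g h l. destruct (O_mono g h l) as [l1 l2]. unfold phiG.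
  apply comb_mono; [apply g1_mono|apply g2_mono]; assumption.
Qed.

Lemma G_hom : dcpa_hom X phiG.
Proof.
  split; [split; [exact phiG_mono|] | split; [|split; [|split]]].
  - intros D s hD hs.
    assert (ps := psup D s hs).
    assert (h1 : g1 (O1 s) = true <-> exists d, D d /\ g1 (O1 d) = true).
    { rewrite (proj1 (proj1 hp) (fun V => exists d, D d /\ V = O1 d) (O1 s)).
      - split.
        + intros [V [[d [hd ->]] h]]. exists d. auto.
        + intros [d [hd h]]. exists (O1 d). split; [exists d; auto|exact h].
      - intro x. cbn [O1 proj1_sig]. rewrite (proj1 (ps x)). split.
        + intros [d [hd h]]. exists (O1 d). split; [exists d; auto|exact h].
        + intros [V [[d [hd ->]] h]]. exists d. auto. }
    set (S2 := fun V => exists d, D d /\ V = O2 d).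
    assert (h2 : is_sup le2 (fun t => exists V, S2 V /\ g2 V = t) (g2 (O2 s))).
    { apply (proj2 (proj1 (proj1 (proj2 hp)))).
      - split.
        + destruct (proj1 hD) as [d hd]. exists (O2 d). exists d. auto.
        + intros a b [d1 [hd1 ->]] [d2 [hd2 ->]].
          destruct (proj2 hD d1 d2 hd1 hd2) as [c [hc [l1 l2]]].
          exists (O2 c). split; [exists c; auto|].
          split; [exact (proj2 (O_mono _ _ l1))|exact (proj2 (O_mono _ _ l2))].
      - split.
        + intros V [d [hd ->]]. exact (proj2 (O_mono _ _ (proj1 hs d hd))).
        + intros u hu x hx. cbn in hx. destruct (proj1 (proj2 (ps x)) hx) as [d [hd h]].
          exact (hu (O2 d) (ex_intro _ d (conj hd eq_refl)) x h). }
    split.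
    + intros t [d [hd <-]]. apply phiG_mono. exact (proj1 hs d hd).
    + intros u hu. unfold phiG at 1. destruct (g2 (O2 s)) eqn:E2.
      * destruct (classic (exists d, D d /\ g2 (O2 d) = true)) as [[d [hd hd2]]|Hn].
        -- specialize (hu (phiG d) (ex_intro _ d (conj hd eq_refl))).
           unfold phiG in hu. rewrite hd2 in hu. cbn in hu. destruct u; cbn in *; t3.
        -- exfalso. assert (l : le2 true false).
           { apply (proj2 h2). intros t [V [[d [hd ->]] <-]] hv. exfalso; apply Hn; exists d; auto. }
           discriminate (l eq_refl).
      * destruct (g1 (O1 s)) eqn:E1; [|exact I].
        destruct (proj1 h1 eq_refl) as [d [hd hd1]].
        specialize (hu (phiG d) (ex_intro _ d (conj hd eq_refl))).
        unfold phiG in hu. rewrite hd1 in hu. destruct (g2 (O2 d)), u; cbn in *; t3.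
  - intros g h k Hk.
    assert (e1 : g1 (O1 k) = g1 (O1 g) || g1 (O1 h)).
    { apply g1_union. intro x. cbn [O1 proj1_sig]. rewrite Hk.
      destruct (proj1_sig g x), (proj1_sig h x); cbn; split;
      try (intros [hh|hh]); intros; auto; try discriminate. }
    assert (e2 : g2 (O2 k) = g2 (O2 g) && g2 (O2 h)).
    { apply (proj1 (proj2 (proj1 (proj2 hp)))). intro x. cbn [O2 proj1_sig]. rewrite Hk.
      destruct (proj1_sig g x), (proj1_sig h x); cbn; split;
      try (intros [hh hh']); intros; auto; try discriminate. }
    unfold phiG. rewrite e1, e2. assert (la := g_le g). assert (lb := g_le h).
    revert la lb. generalize (g1 (O1 g)) (g2 (O2 g)) (g1 (O1 h)) (g2 (O2 h)).
    intros a b c d; unfold le2; destruct a, b, c, d; cbn; intros; t3.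
  - intros k Hk. unfold phiG.
    rewrite (proj2 (proj1 hp) (O1 k)) by (intro x; cbn; rewrite Hk; reflexivity).
    rewrite (proj2 (proj2 (proj2 (proj1 (proj2 hp)))) (O2 k)) by (intro x; cbn; rewrite Hk; discriminate).
    reflexivity.
  - intros k Hk. unfold phiG.
    rewrite g1_empty by (intro x; cbn; rewrite Hk; discriminate).
    rewrite (proj2 (proj2 (proj2 (proj1 (proj2 hp)))) (O2 k)) by (intro x; cbn; rewrite Hk; discriminate).
    reflexivity.
  - intros k Hk. unfold phiG.
    rewrite (proj1 (proj2 (proj2 (proj1 (proj2 hp)))) (O2 k)) by (intro x; cbn; rewrite Hk; reflexivity).
    destruct (g1 (O1 k)); reflexivity.
Qed.

End GSec.


Theorem mainTheorem14 (X : dcpo) :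
  exists (F : wp X -> pairs X) (G : pairs X -> wp X),
    (forall a, G (F a) = a) /\ (forall b, F (G b) = b).
Proof.
  exists (fun a : wp X => exist _ (f1 (proj1_sig a), f2 (proj1_sig a))
            (conj (F_CL _ (proj2_sig a)) (conj (F_pre _ (proj2_sig a)) (F_le _)))
          : pairs X).
  exists (fun b : pairs X => exist _ (phiG (fst (proj1_sig b)) (snd (proj1_sig b)))
            (G_hom _ _ (proj2_sig b)) : wp X).
  split.
  - intros [phi H]. apply sig_ext. cbn. apply functional_extensionality. intro g.
    unfold phiG, f1, f2. destruct (key phi H g) as [k1 k2]. rewrite <- k1, <- k2.
    destruct (phi g); reflexivity.
  - intros [[g1 g2] hb]. apply sig_ext. cbn.
    assert (hl := proj2 (proj2 hb)).
    f_equal; apply functional_extensionality; intro U; unfold f1, f2, phiG;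
    rewrite O1_chi, O2_chi; specialize (hl U); unfold le2 in hl; cbn in hl;
    destruct (g1 U), (g2 U); cbn; t3; discriminate (hl eq_refl).
Qed.
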